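(* Let $U,V,W$ be Hermitian spaces with $U$ finite-dimensional, $D\in\mathrm{Hom}(U,V)$ linear, and $\rho:V\times U^*\to W$ bilinear. Then $$\|\mathrm{Tr}_\rho D\|_W\le\sqrt{\mathrm{rank}(D)}\,\|\rho\|\,\|D\|.$$
   Context: $\mathrm{Tr}_\rho D=\sum_i\rho(Du_i,u^i)\in W$ for a basis $\{u_i\}$ of $U$ with dual basis $\{u^i\}$ of $U^*$ (independent of the basis). $U^*$ carries the dual Hermitian structure. $\|\rho\|=\sup\{\|\rho(v,\alpha)\|_W:\|v\|_V=1,\|\alpha\|_{U^*}=1\}$, and $\|D\|=\big(\sum_i\|Du_i\|_V^2\big)^{1/2}$ for an orthonormal basis $\{u_i\}$ of $U$ (Hilbert–Schmidt norm). *)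

(* Defs.v *)
From HB Require Import structures.
From mathcomp Require Import all_boot all_order all_algebra.
From mathcomp Require Import all_classical all_reals.
From mathcomp Require Import ereal.
From mathcomp Require Import complex.

Set Implicit Arguments.
Unset Strict Implicit.
Unset Printing Implicit Defensive.

Import Order.TTheory GRing.Theory Num.Theory.
Local Open Scope ring_scope.

Record herm_space (R : realType) (V : lmodType R[i]) := HermSpace {
  hdot : V -> V -> R[i];
  hdot_linl : forall (a : R[i]) (u v w : V),
    hdot (a *: u + v) w = a * hdot u w + hdot v w;
  hdot_sym : forall u v : V, hdot v u = conjc (hdot u v);
  hdot_pos : forall v : V, v != 0 -> 0 < hdot v v
}.

Definition hnorm (R : realType) (V : lmodType R[i]) (H : herm_space V) (v : V) : R :=
  Num.sqrt (complex.Re (hdot H v v)).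

Definition orthonormal_tuple (R : realType) (V : lmodType R[i]) (H : herm_space V)
  (n : nat) (e : n.-tuple V) : Prop :=
  forall i j : 'I_n, hdot H (tnth e i) (tnth e j) = (i == j)%:R.


(* The dual basis element u^i = < . , e_i > of an orthonormal_tuple basis e. *)
Definition dualvec (R : realType) (U : vectType R[i]) (H : herm_space U)
  (n : nat) (e : n.-tuple U) (i : 'I_n) : 'Hom(U, R[i]^o) :=
  linfun (fun u : U => (hdot H u (tnth e i) : R[i]^o)).

(* The dual Hermitian structure on U^*, computed in an orthonormal_tuple basis e of U:
   <a, b>_{U^*} = sum_i a(e_i) conj(b(e_i)); its norm. *)
Definition dualdot (R : realType) (U : vectType R[i])
  (n : nat) (e : n.-tuple U) (a b : 'Hom(U, R[i]^o)) : R[i] :=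
  \sum_(i < n) (a (tnth e i) : R[i]) * conjc (b (tnth e i) : R[i]).

Definition dualnorm (R : realType) (U : vectType R[i])
  (n : nat) (e : n.-tuple U) (a : 'Hom(U, R[i]^o)) : R :=
  Num.sqrt (complex.Re (dualdot e a a)).

Definition trace_rho (R : realType) (U : vectType R[i]) (V W : lmodType R[i])
  (HU : herm_space U) (n : nat) (e : n.-tuple U)
  (rho : V -> 'Hom(U, R[i]^o) -> W) (D : U -> V) : W :=
  \sum_(i < n) rho (D (tnth e i)) (dualvec HU e i).

(* ||rho|| = sup { ||rho(v,a)||_W : ||v||_V = 1, ||a||_{U^*} = 1 } in \bar R
   (it may be +oo when V is infinite dimensional). *)
Definition rho_norm (R : realType) (U : vectType R[i]) (V W : lmodType R[i])
  (HV : herm_space V) (HW : herm_space W) (n : nat) (e : n.-tuple U)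
  (rho : V -> 'Hom(U, R[i]^o) -> W) : \bar R :=
  ereal_sup (fun x : \bar R => exists v : V, exists a : 'Hom(U, R[i]^o),
    [/\ hnorm HV v = 1, dualnorm e a = 1 & x = (hnorm HW (rho v a))%:E]).

Definition hs_norm (R : realType) (U : vectType R[i]) (V : lmodType R[i])
  (HV : herm_space V) (n : nat) (e : n.-tuple U) (D : U -> V) : R :=
  Num.sqrt (\sum_(i < n) hnorm HV (D (tnth e i)) ^+ 2).

(* Linear independence of a finite family in a (possibly infinite-dimensional) module. *)
Definition lin_indep (R : realType) (V : lmodType R[i]) (s : seq V) : Prop :=
  forall c : 'I_(size s) -> R[i],
    \sum_(i < size s) c i *: nth 0 s i = 0 -> forall i, c i = 0.

(* rank D = dim (im D) = maximal number of linearly independent vectors of the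
   form D u (bounded by dim U). *)
Definition rank_lin (R : realType) (U : vectType R[i]) (V : lmodType R[i])
  (D : U -> V) : nat :=
  (\max_(k < (\dim (fullv : {vspace U})).+1 |
      `[< exists s : k.-tuple U, lin_indep (map D s) >]) k)%N.

(* Main.v *)
Require Import Defs.
From HB Require Import structures.
From mathcomp Require Import all_boot all_order all_algebra.
From mathcomp Require Import all_classical all_reals.
From mathcomp Require Import ereal.
From mathcomp Require Import complex.
From mathcomp Require Import ring lra.
Import Order.TTheory GRing.Theory Num.Theory.
Local Open Scope ring_scope.
Local Open Scope complex_scope.
Set Implicit Arguments.
Unset Strict Implicit.
Unset Printing Implicit Defensive.

Lemma ReM_real (R : realType) (t : R) (z : R[i]) : complex.Re (t%:C * z) = t * complex.Re z.
Proof. case: z => a b /=. simpc. by []. Qed.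
Lemma Re_conj (R : realType) (z : R[i]) : complex.Re (conjc z) = complex.Re z.
Proof. by case: z. Qed.
Lemma Re_mulJ (R : realType) (z : R[i]) : complex.Re (z * conjc z) = complex.Re z ^+ 2 + complex.Im z ^+ 2.
Proof. case: z => a b /=. simpc. rewrite /=. ring. Qed.

Lemma conjcD' (R : realType) (x y : R[i]) : conjc (x + y) = conjc x + conjc y.
Proof. by case: x; case: y => a b c d /=; simpc. Qed.
Lemma conjcM' (R : realType) (x y : R[i]) : conjc (x * y) = conjc x * conjc y.
Proof. case: x; case: y => a b c d /=; simpc. by rewrite /=; congr Complex; ring. Qed.

Lemma hdot0l (R : realType) (V : lmodType R[i]) (H : herm_space V) (w : V) :
  hdot H 0 w = 0.
Proof.
have := hdot_linl H 1 0 0 w; rewrite scale1r addr0 mul1r.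
by move/(congr1 (fun z => z - hdot H 0 w)); rewrite addrK subrr.
Qed.

Lemma hdotDl (R : realType) (V : lmodType R[i]) (H : herm_space V) (u v w : V) :
  hdot H (u + v) w = hdot H u w + hdot H v w.
Proof. by have := hdot_linl H 1 u v w; rewrite scale1r mul1r. Qed.

Lemma hdotZl (R : realType) (V : lmodType R[i]) (H : herm_space V) a (u w : V) :
  hdot H (a *: u) w = a * hdot H u w.
Proof. by have := hdot_linl H a u 0 w; rewrite addr0 hdot0l addr0. Qed.

Lemma hdot0r (R : realType) (V : lmodType R[i]) (H : herm_space V) (w : V) :
  hdot H w 0 = 0.
Proof. by rewrite hdot_sym hdot0l conjc0. Qed.

Lemma hdotDr (R : realType) (V : lmodType R[i]) (H : herm_space V) (u v w : V) :
  hdot H w (u + v) = hdot H w u + hdot H w v.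
Proof. by rewrite [LHS]hdot_sym hdotDl conjcD' (hdot_sym H w u) (hdot_sym H w v) !conjcK. Qed.

Lemma hdotZr (R : realType) (V : lmodType R[i]) (H : herm_space V) a (u w : V) :
  hdot H w (a *: u) = conjc a * hdot H w u.
Proof. by rewrite [LHS]hdot_sym hdotZl conjcM' (hdot_sym H u w). Qed.

Lemma hdotNl (R : realType) (V : lmodType R[i]) (H : herm_space V) (u w : V) :
  hdot H (- u) w = - hdot H u w.
Proof. by rewrite -scaleN1r hdotZl mulN1r. Qed.

Lemma hdotBl (R : realType) (V : lmodType R[i]) (H : herm_space V) (u v w : V) :
  hdot H (u - v) w = hdot H u w - hdot H v w.
Proof. by rewrite hdotDl hdotNl. Qed.

Lemma hdot_suml (R : realType) (V : lmodType R[i]) (H : herm_space V) n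
  (c : 'I_n -> R[i]) (x : 'I_n -> V) (w : V) :
  hdot H (\sum_(i < n) c i *: x i) w = \sum_(i < n) c i * hdot H (x i) w.
Proof.
apply: (big_rec2 (fun a b => hdot H a w = b)); first exact: hdot0l.
by move=> i a b _ <-; rewrite hdotDl hdotZl.
Qed.

Lemma hdot_selfE (R : realType) (V : lmodType R[i]) (H : herm_space V) (v : V) :
  hdot H v v = (complex.Re (hdot H v v))%:C.
Proof.
have := hdot_sym H v v; case: (hdot H v v) => a b [] /eqP.
rewrite -subr_eq0 opprK -mulr2n mulrn_eq0 /= => /eqP ->. by [].
Qed.

Lemma hdot_self_ge0 (R : realType) (V : lmodType R[i]) (H : herm_space V) (v : V) :
  0 <= complex.Re (hdot H v v).
Proof.
have [->|nz] := eqVneq v 0; first by rewrite hdot0l.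
by have := hdot_pos H nz; rewrite ltcE => /andP[_ /ltW].
Qed.

Lemma hdot_self_gt0 (R : realType) (V : lmodType R[i]) (H : herm_space V) (v : V) :
  v != 0 -> 0 < complex.Re (hdot H v v).
Proof. by move=> nz; have := hdot_pos H nz; rewrite ltcE => /andP[_]. Qed.

Lemma hnorm_ge0 (R : realType) (V : lmodType R[i]) (H : herm_space V) (v : V) :
  0 <= hnorm H v.
Proof. exact: sqrtr_ge0. Qed.

Lemma hnorm_sq (R : realType) (V : lmodType R[i]) (H : herm_space V) (v : V) :
  hnorm H v ^+ 2 = complex.Re (hdot H v v).
Proof. by rewrite sqr_sqrtr // hdot_self_ge0. Qed.

Lemma hnorm0 (R : realType) (V : lmodType R[i]) (H : herm_space V) :
  hnorm H 0 = 0.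
Proof. by rewrite /hnorm hdot0l sqrtr0. Qed.

Lemma ReD (R : realType) (x y : R[i]) : complex.Re (x + y) = complex.Re x + complex.Re y.
Proof. by case: x; case: y. Qed.

Lemma hdot_expand (R : realType) (V : lmodType R[i]) (H : herm_space V) (x y : V) (t : R) :
  complex.Re (hdot H (x + t%:C *: y) (x + t%:C *: y)) =
  complex.Re (hdot H x x) + 2 * t * complex.Re (hdot H x y) + t ^+ 2 * complex.Re (hdot H y y).
Proof.
rewrite hdotDl !hdotDr !hdotZl !hdotZr conjc_real !ReD !ReM_real.
rewrite (hdot_sym H x y) Re_conj; ring.
Qed.

Lemma hdot_CS (R : realType) (V : lmodType R[i]) (H : herm_space V) (x y : V) :
  complex.Re (hdot H x y) ^+ 2 <= complex.Re (hdot H x x) * complex.Re (hdot H y y).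
Proof.
have [->|nz] := eqVneq y 0; first by rewrite !hdot0r /= expr0n mulr0.
set a := complex.Re (hdot H x x); set p := complex.Re (hdot H x y).
set b := complex.Re (hdot H y y).
have bpos : 0 < b by apply: hdot_self_gt0.
have h := hdot_self_ge0 H (x + (- p / b)%:C *: y).
rewrite hdot_expand -/a -/b -/p in h.
have hb := mulr_ge0 (ltW bpos) h.
have e : b * (a + 2 * (- p / b) * p + (- p / b) ^+ 2 * b) = a * b - p ^+ 2.
  by field; rewrite gt_eqF.
rewrite e in hb; lra.
Qed.

Lemma hnorm_triangle (R : realType) (V : lmodType R[i]) (H : herm_space V) (x y : V) :
  hnorm H (x + y) <= hnorm H x + hnorm H y.
Proof.
have := hdot_expand H x y 1; rewrite scale1r -!hnorm_sq.
have := hdot_CS H x y; rewrite -!hnorm_sq.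
have := hnorm_ge0 H x; have := hnorm_ge0 H y; have := hnorm_ge0 H (x + y).
set p := complex.Re _; set u := hnorm H (x + y); set a := hnorm H x; set b := hnorm H y.
move=> hu hb ha hcs he.
have hp : p <= a * b.
  rewrite leNgt; apply/negP => hlt.
  have h1 : 0 <= a * b by apply: mulr_ge0.
  have h2 : 0 < p + a * b by lra.
  have h3 : 0 < (p + a * b) * (p - a * b) by apply: mulr_gt0 => //; rewrite subr_gt0.
  nra.
have hs : u ^+ 2 <= (a + b) ^+ 2 by nra.
nra.
Qed.

Lemma hnorm_scale (R : realType) (V : lmodType R[i]) (H : herm_space V) (v : V) (t : R) :
  0 <= t -> hnorm H (t%:C *: v) = t * hnorm H v.
Proof.
move=> t0; rewrite /hnorm hdotZl hdotZr conjc_real !ReM_real mulrA sqrtrM ?mul_ge0 ?hdot_self_ge0 //.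
  by rewrite -expr2 sqrtr_sqr ger0_norm.
by rewrite mulr_ge0.
Qed.

Definition rhoL (R : realType) (U : vectType R[i]) (V W : lmodType R[i])
  (rho : V -> 'Hom(U, R[i]^o) -> W) :=
  forall (a : 'Hom(U, R[i]^o)) (c : R[i]) (v v' : V),
      rho (c *: v + v') a = c *: rho v a + rho v' a.
Definition rhoR (R : realType) (U : vectType R[i]) (V W : lmodType R[i])
  (rho : V -> 'Hom(U, R[i]^o) -> W) :=
  forall (v : V) (c : R[i]) (a a' : 'Hom(U, R[i]^o)),
      rho v (c *: a + a') = c *: rho v a + rho v a'.

Lemma rho0l (R : realType) (U : vectType R[i]) (V W : lmodType R[i])
  (rho : V -> 'Hom(U, R[i]^o) -> W) (hl : rhoL rho) a : rho 0 a = 0.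
Proof.
have h := hl a 1 0 0; rewrite !scale1r addr0 in h.
by move/(congr1 (fun z => z - rho 0 a)): h; rewrite addrK subrr.
Qed.

Lemma rhoDl (R : realType) (U : vectType R[i]) (V W : lmodType R[i])
  (rho : V -> 'Hom(U, R[i]^o) -> W) (hl : rhoL rho) a v v' :
  rho (v + v') a = rho v a + rho v' a.
Proof. by have := hl a 1 v v'; rewrite !scale1r. Qed.

Lemma rhoZl (R : realType) (U : vectType R[i]) (V W : lmodType R[i])
  (rho : V -> 'Hom(U, R[i]^o) -> W) (hl : rhoL rho) a c v :
  rho (c *: v) a = c *: rho v a.
Proof. by have := hl a c v 0; rewrite !addr0 rho0l // addr0. Qed.

Lemma rho0r (R : realType) (U : vectType R[i]) (V W : lmodType R[i])
  (rho : V -> 'Hom(U, R[i]^o) -> W) (hr : rhoR rho) v : rho v 0 = 0.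
Proof.
have h := hr v 1 0 0; rewrite !scale1r addr0 in h.
by move/(congr1 (fun z => z - rho v 0)): h; rewrite addrK subrr.
Qed.

Lemma rhoZr (R : realType) (U : vectType R[i]) (V W : lmodType R[i])
  (rho : V -> 'Hom(U, R[i]^o) -> W) (hr : rhoR rho) a c v :
  rho v (c *: a) = c *: rho v a.
Proof. by have := hr v c a 0; rewrite !addr0 rho0r // addr0. Qed.

Lemma rho_sumr (R : realType) (U : vectType R[i]) (V W : lmodType R[i])
  (rho : V -> 'Hom(U, R[i]^o) -> W) (hr : rhoR rho) v n (c : 'I_n -> R[i]) a :
  rho v (\sum_(i < n) c i *: a i) = \sum_(i < n) c i *: rho v (a i).
Proof.
apply: (big_rec2 (fun x y => rho v x = y)); first exact: rho0r.
by move=> i x y _ <-; rewrite hr.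
Qed.

Lemma dualvecE (R : realType) (U : vectType R[i]) (HU : herm_space U) n
  (e : n.-tuple U) i x : (dualvec HU e i x : R[i]) = hdot HU x (tnth e i).
Proof.
pose f (u : U) : R[i]^o := hdot HU u (tnth e i).
have lin_f : linear f by move=> a u v; rewrite /f hdot_linl.
pose flM := GRing.isLinear.Build _ _ _ _ f lin_f.
pose fL : {linear U -> R[i]^o} := HB.pack f flM.
exact: (lfunE fL x).
Qed.

Lemma dual_sumE (R : realType) (U : vectType R[i]) (HU : herm_space U) n
  (e : n.-tuple U) (he : orthonormal_tuple HU e) (c : 'I_n -> R[i]) j :
  ((\sum_(i < n) c i *: dualvec HU e i) (tnth e j) : R[i]) = c j.
Proof.
rewrite sum_lfunE (bigD1 j) //= big1 ?addr0.
  by rewrite scale_lfunE dualvecE he eqxx /=; exact: mulr1.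
move=> i /negPf ij; rewrite scale_lfunE dualvecE he eq_sym ij /=.
exact: scaler0.
Qed.

Lemma ReSum (R : realType) n (F : 'I_n -> R[i]) :
  complex.Re (\sum_(i < n) F i) = \sum_(i < n) complex.Re (F i).
Proof.
apply: (big_rec2 (fun x y => complex.Re x = y)) => //.
by move=> i x y _ <-; rewrite ReD.
Qed.

Lemma Re_mulJ_ge0 (R : realType) (z : R[i]) : 0 <= complex.Re (z * conjc z).
Proof. by rewrite Re_mulJ addr_ge0 // sqr_ge0. Qed.

Lemma dualnorm_sum (R : realType) (U : vectType R[i]) (HU : herm_space U) n
  (e : n.-tuple U) (he : orthonormal_tuple HU e) (c : 'I_n -> R[i]) :
  dualnorm e (\sum_(i < n) c i *: dualvec HU e i) =
  Num.sqrt (\sum_(i < n) complex.Re (c i * conjc (c i))).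
Proof.
rewrite /dualnorm /dualdot ReSum; congr Num.sqrt; apply: eq_bigr => j _.
by rewrite dual_sumE.
Qed.

Lemma dualnorm_ge0 (R : realType) (U : vectType R[i]) n (e : n.-tuple U) a :
  0 <= dualnorm e a.
Proof. exact: sqrtr_ge0. Qed.

Lemma dualnorm_scale (R : realType) (U : vectType R[i]) n (e : n.-tuple U) a (t : R) :
  0 <= t -> dualnorm e (t%:C *: a) = t * dualnorm e a.
Proof.
move=> t0; rewrite /dualnorm /dualdot !ReSum.
have -> : \sum_(i < n) complex.Re ((t%:C *: a) (tnth e i) * ((t%:C *: a) (tnth e i))^*)
   = t ^+ 2 * \sum_(i < n) complex.Re (a (tnth e i) * (a (tnth e i))^*).
  rewrite mulr_sumr; apply: eq_bigr => i _; rewrite scale_lfunE.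
  case: (a (tnth e i) : R[i]) => x y /=; rewrite /= ; simpc; rewrite /=; ring.
rewrite sqrtrM ?sqr_ge0 // sqrtr_sqr ger0_norm //.
Qed.

Definition Pr (R : realType) (U : vectType R[i]) (V : lmodType R[i]) (D : U -> V) (r : nat) :=
  forall s : seq U, lin_indep (map D s) -> (size s <= r)%N.

Lemma Pr0 (R : realType) (U : vectType R[i]) (V : lmodType R[i]) (D : U -> V) :
  Pr D 0 -> forall u, D u = 0.
Proof.
move=> h u; apply/eqP; apply/negPn/negP => nz.
suff : (size [:: u] <= 0)%N by [].
apply: h => c /=; rewrite big_ord1 /= => /eqP; rewrite scaler_eq0 (negPf nz) orbF => /eqP c0 i.
by rewrite (ord1 i).
Qed.

Lemma pyth (R : realType) (V : lmodType R[i]) (H : herm_space V) (f y : V) x :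
  hdot H f f = 1 -> hdot H y f = 0 ->
  hnorm H (x *: f + y) ^+ 2 = complex.Re (x * conjc x) + hnorm H y ^+ 2.
Proof.
move=> hf hyf; rewrite !hnorm_sq hdotDl !hdotDr !hdotZl !hdotZr hf hyf.
rewrite (hdot_sym H y f) hyf conjc0 !mulr0 mulr1 addr0 add0r ReD.
by rewrite mulrC.
Qed.

Lemma indep_step (R : realType) (U : vectType R[i]) (V : lmodType R[i]) (H : herm_space V)
  (D D' : U -> V) (f : V) (nw : R[i]) (u0 : U) :
  hdot H f f = 1 -> nw != 0 -> D u0 = nw *: f ->
  (forall u, D u = D' u + hdot H (D u) f *: f) ->
  (forall u, hdot H (D' u) f = 0) ->
  forall s, lin_indep (map D' s) -> lin_indep (map D (u0 :: s)).
Proof.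
move=> hf nw0 hu0 hD hD' s; rewrite /lin_indep !size_map /= => hs c.
rewrite big_ord_recl /=.
set S' := \sum_(i < size s) c (lift ord0 i) *: D' (nth 0 s i).
set mu := \sum_(i < size s) c (lift ord0 i) * hdot H (D (nth 0 s i)) f.
have -> : \sum_(i < size s) c (lift ord0 i) *: [seq D i | i <- s]`_(0 + i) = S' + mu *: f.
  rewrite /S' /mu scaler_suml -big_split; apply: eq_bigr => i _.
  by rewrite add0n (nth_map 0) ?ltn_ord // {1}hD scalerDr scalerA.
rewrite hu0 scalerA addrCA -scalerDl => hc.
have hS'f : hdot H S' f = 0.
  rewrite /S' hdot_suml big1 // => i _; by rewrite hD' mulr0.
have hlam : c ord0 * nw + mu = 0.
  have := congr1 (fun z => hdot H z f) hc; rewrite /= hdotDl hS'f hdotZl hf hdot0l.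
  by rewrite add0r mulr1.
rewrite hlam scale0r addr0 in hc.
have hc' : forall i, c (lift ord0 i) = 0.
  apply: hs; rewrite -[RHS]hc /S'; apply: eq_bigr => i _.
  by rewrite (nth_map 0) ?ltn_ord.
have hmu : mu = 0 by rewrite /mu big1 // => i _; rewrite hc' mul0r.
move: hlam; rewrite hmu addr0 => /eqP; rewrite mulf_eq0 (negPf nw0) orbF => /eqP c0.
move=> i; case: (unliftP ord0 i) => [j ->|->]; first exact: hc'.
exact: c0.
Qed.

Lemma le_of_sq (R : realType) (x y : R) : 0 <= y -> x ^+ 2 <= y ^+ 2 -> x <= y.
Proof.
move=> y0 h; rewrite leNgt; apply/negP => hlt.
have h1 : 0 < x + y by lra.
have h3 : 0 < (x + y) * (x - y) by apply: mulr_gt0 => //; rewrite subr_gt0.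
nra.
Qed.

Lemma arith (R : realType) (M al be h : R) (r : nat) :
  0 <= M -> 0 <= al -> 0 <= be -> 0 <= h -> h ^+ 2 = al ^+ 2 + be ^+ 2 ->
  M * al + Num.sqrt (r%:R) * M * be <= Num.sqrt (r.+1%:R) * M * h.
Proof.
move=> M0 a0 b0 h0 hh.
set s := Num.sqrt (r%:R); set s' := Num.sqrt (r.+1%:R).
have s0 : 0 <= s by apply: sqrtr_ge0.
have s'0 : 0 <= s' by apply: sqrtr_ge0.
have ss : s ^+ 2 = r%:R by rewrite sqr_sqrtr ?ler0n.
have ss' : s' ^+ 2 = r%:R + 1 by rewrite sqr_sqrtr ?ler0n // -addn1 natrD.
have key : al + s * be <= s' * h.
  apply: le_of_sq; first exact: mulr_ge0.
  rewrite exprMn ss' hh -ss -subr_ge0.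
  have -> : (s ^+ 2 + 1) * (al ^+ 2 + be ^+ 2) - (al + s * be) ^+ 2 = (s * al - be) ^+ 2 by ring.
  exact: sqr_ge0.
have := ler_wpM2l M0 key.
have -> : M * (al + s * be) = M * al + s * M * be by ring.
by have -> : M * (s' * h) = s' * M * h by ring.
Qed.

Lemma cJ0 (R : realType) (z : R[i]) : complex.Re (z * conjc z) = 0 -> z = 0.
Proof.
rewrite Re_mulJ; case: z => a b /= h.
have ha : a = 0 by nra.
have hb : b = 0 by nra.
by rewrite ha hb.
Qed.

Lemma hs_sq (R : realType) (U : vectType R[i]) (V : lmodType R[i]) (HV : herm_space V)
  n (e : n.-tuple U) (D : U -> V) :
  hs_norm HV e D ^+ 2 = \sum_(i < n) hnorm HV (D (tnth e i)) ^+ 2.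
Proof. by rewrite sqr_sqrtr // sumr_ge0 // => i _; rewrite sqr_ge0. Qed.

Lemma core (R : realType) (U : vectType R[i]) (V W : lmodType R[i])
  (HU : herm_space U) (HV : herm_space V) (HW : herm_space W)
  n (e : n.-tuple U) (he : orthonormal_tuple HU e)
  (rho : V -> 'Hom(U, R[i]^o) -> W) (hl : rhoL rho) (hr : rhoR rho)
  (M : R) (M0 : 0 <= M)
  (hM : forall v a, 0 < dualnorm e a ->
     hnorm HW (rho v a) <= M * hnorm HV v * dualnorm e a) (r : nat) :
  forall D : U -> V, (forall c u v, D (c *: u + v) = c *: D u + D v) -> Pr D r ->
  hnorm HW (trace_rho HU e rho D) <= Num.sqrt (r%:R) * M * hs_norm HV e D.
Proof.
elim: r => [|r IH] D hlin hP.
  have D0 := Pr0 hP.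
  rewrite /trace_rho big1 ?hnorm0 ?sqrtr0 ?mul0r // => i _.
  by rewrite D0 rho0l.
have [[k hk]|hall] := pselect (exists k, D (tnth e k) != 0); last first.
  rewrite /trace_rho big1 ?hnorm0.
    by rewrite !mulr_ge0 ?sqrtr_ge0.
  move=> i _; have -> : D (tnth e i) = 0.
    by apply/eqP; apply/negPn/negP => h; apply: hall; exists i.
  by rewrite rho0l.
set w := D (tnth e k).
have wpos : 0 < hnorm HV w by rewrite sqrtr_gt0 hdot_self_gt0.
set nw := hnorm HV w.
set f := (nw^-1)%:C *: w.
have hf : hdot HV f f = 1.
  rewrite /f hdotZl hdotZr conjc_real hdot_selfE -/(hnorm HV w) -hnorm_sq -/nw.
  rewrite -!rmorphM /=; congr (_%:C).
  by field; rewrite gt_eqF.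
have hw : w = nw%:C *: f.
  by rewrite /f scalerA -rmorphM /= mulfV ?gt_eqF // scale1r.
pose D' u := D u - hdot HV (D u) f *: f.
have hD : forall u, D u = D' u + hdot HV (D u) f *: f by move=> u; rewrite subrK.
have hD'f : forall u, hdot HV (D' u) f = 0.
  by move=> u; rewrite /D' hdotBl hdotZl hf mulr1 subrr.
have hlin' : forall c u v, D' (c *: u + v) = c *: D' u + D' v.
  move=> c u v; rewrite /D' hlin hdotDl hdotZl scalerDl -scalerA scalerBr opprD.
  by rewrite addrACA.
have hP' : Pr D' r.
  move=> s hs.
  have nw0 : nw%:C != 0 by rewrite eq_complex /= eqxx andbT gt_eqF.
  have := hP _ (indep_step hf nw0 hw hD hD'f hs).
  by [].
have IH' := IH D' hlin' hP'.
set c := fun i => hdot HV (D (tnth e i)) f.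
set a := \sum_(i < n) c i *: dualvec HU e i.
have hT : trace_rho HU e rho D = rho f a + trace_rho HU e rho D'.
  rewrite /trace_rho /a rho_sumr // -big_split; apply: eq_bigr => i _.
  by rewrite {1}hD addrC hl.
set al := dualnorm e a.
have hal : al = Num.sqrt (\sum_(i < n) complex.Re (c i * conjc (c i))).
  exact: dualnorm_sum.
have hf1 : hnorm HV f = 1 by rewrite /hnorm hf /= sqrtr1.
have h1 : hnorm HW (rho f a) <= M * al.
  have [alpos|] := ltrP 0 al.
    by have := hM f a alpos; rewrite hf1 mulr1.
  move=> al0.
  have : al = 0 by apply/eqP; rewrite eq_le al0 dualnorm_ge0.
  rewrite hal => /eqP; rewrite sqrtr_eq0 => hle.
  have hs0 : \sum_(i < n) complex.Re (c i * conjc (c i)) = 0.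
    by apply/eqP; rewrite eq_le hle sumr_ge0 // => i _; apply: Re_mulJ_ge0.
  have ci0 : forall i, c i = 0.
    move=> i; apply: cJ0; apply: (psumr_eq0P _ hs0) => // j _; exact: Re_mulJ_ge0.
  have -> : a = 0 by rewrite /a big1 // => i _; rewrite ci0 scale0r.
  by rewrite rho0r // hnorm0 mulr_ge0 // dualnorm_ge0.
have hhs : hs_norm HV e D ^+ 2 = al ^+ 2 + hs_norm HV e D' ^+ 2.
  rewrite !hs_sq hal sqr_sqrtr; last by rewrite sumr_ge0 // => i _; apply: Re_mulJ_ge0.
  rewrite -big_split; apply: eq_bigr => i _.
  by rewrite hD addrC pyth.
rewrite hT.
apply: le_trans (hnorm_triangle _ _ _) _.
apply: le_trans (lerD h1 IH') _.
apply: arith => //; [exact: dualnorm_ge0 | exact: sqrtr_ge0 | exact: sqrtr_ge0].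
Qed.

Lemma indep1 (R : realType) (U : vectType R[i]) (V : lmodType R[i]) (D : U -> V) u :
  D u != 0 -> lin_indep (map D [:: u]).
Proof.
move=> nz c /=; rewrite big_ord1 /= => /eqP; rewrite scaler_eq0 (negPf nz) orbF => /eqP c0 i.
by rewrite (ord1 i).
Qed.

Lemma Pr_rank (R : realType) (U : vectType R[i]) (V : lmodType R[i])
  (D : {linear U -> V}) : Pr D (rank_lin D).
Proof.
move=> s hs.
have hfree : free (in_tuple s).
  apply/freeP => k hk i; move: hs; rewrite /lin_indep size_map => hs; apply: hs.
  rewrite -[RHS](linear0 D) -hk linear_sum; apply: eq_bigr => j _.
  by rewrite linearZ (nth_map 0).
have hdim : (size s <= \dim (fullv : {vspace U}))%N.
  move/eqnP: hfree => /= <-; exact: dimvS (subvf _).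
rewrite /rank_lin.
apply: (leq_bigmax_cond (Ordinal (hdim : (size s < (\dim (fullv : {vspace U})).+1)%N))).
by apply: asboolT; exists (in_tuple s).
Qed.

Unset Implicit Arguments.

Theorem lemma2p2 (R : realType) (U : vectType R[i]) (V W : lmodType R[i])
  (HU : herm_space U) (HV : herm_space V) (HW : herm_space W)
  (e : (\dim (fullv : {vspace U})).-tuple U) (he : orthonormal_tuple HU e)
  (D : {linear U -> V})
  (rho : V -> 'Hom(U, R[i]^o) -> W)
  (rho_linl : forall (a : 'Hom(U, R[i]^o)) (c : R[i]) (v v' : V),
      rho (c *: v + v') a = c *: rho v a + rho v' a)
  (rho_linr : forall (v : V) (c : R[i]) (a a' : 'Hom(U, R[i]^o)),
      rho v (c *: a + a') = c *: rho v a + rho v a') :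
  ((hnorm HW (trace_rho HU e rho D))%:E
    <= (Num.sqrt ((rank_lin D)%:R : R))%:E * rho_norm HV HW e rho
       * (hs_norm HV e D)%:E)%E.
Proof.
have hl : rhoL rho := rho_linl.
have hr : rhoR rho := rho_linr.
have hlin : forall c u v, D (c *: u + v) = c *: D u + D v.
  by move=> c u v; rewrite linearP.
have hP : Pr D (rank_lin D) := @Pr_rank _ _ _ D.
have [[k hk]|hall] := pselect (exists k, D (tnth e k) != 0); last first.
  have D0 : forall i, D (tnth e i) = 0.
    by move=> i; apply/eqP; apply/negPn/negP => h; apply: hall; exists i.
  have -> : trace_rho HU e rho D = 0.
    by rewrite /trace_rho big1 // => i _; rewrite D0 rho0l.
  have -> : hs_norm HV e D = 0.
    by rewrite /hs_norm big1 ?sqrtr0 // => i _; rewrite D0 hnorm0 expr0n.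
  by rewrite hnorm0 mule0.
set w := D (tnth e k).
have wpos : 0 < hnorm HV w by rewrite sqrtr_gt0 hdot_self_gt0.
have rpos : (0 < rank_lin D)%N by have := hP _ (indep1 hk).
have hpos : 0 < hs_norm HV e D.
  rewrite sqrtr_gt0 (bigD1 k) //=.
  have : 0 <= \sum_(i < \dim fullv | i != k) hnorm HV (D (tnth e i)) ^+ 2.
    by rewrite sumr_ge0 // => i _; rewrite sqr_ge0.
  have : 0 < hnorm HV (D (tnth e k)) ^+ 2 by rewrite exprn_gt0.
  lra.
set v0 := ((hnorm HV w)^-1)%:C *: w.
have hv0 : hnorm HV v0 = 1.
  by rewrite /v0 hnorm_scale ?invr_ge0 ?ltW // mulVf ?gt_eqF.
have ha0 : dualnorm e (dualvec HU e k) = 1.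
  rewrite /dualnorm /dualdot (bigD1 k) //= big1 => [|j /negPf jk].
    by rewrite !dualvecE he eqxx /= mul1r mul0r subr0 addr0 sqrtr1.
  by rewrite !dualvecE he jk /= mul0r.
have lb : ((hnorm HW (rho v0 (dualvec HU e k)))%:E <= rho_norm HV HW e rho)%E.
  by apply: ereal_sup_ubound; exists v0, (dualvec HU e k); split.
case E: (rho_norm HV HW e rho) lb => [M| |] lb.
- have M0 : 0 <= M by move: lb; rewrite lee_fin; apply: le_trans; exact: hnorm_ge0.
  have hM : forall v a, 0 < dualnorm e a ->
      hnorm HW (rho v a) <= M * hnorm HV v * dualnorm e a.
    move=> v a apos.
    have [->|vnz] := eqVneq v 0.
      by rewrite rho0l // hnorm0 hnorm0 mulr0 mul0r.
    have vpos : 0 < hnorm HV v by rewrite sqrtr_gt0 hdot_self_gt0.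
    set nv := hnorm HV v; set na := dualnorm e a.
    have key : ((hnorm HW (rho ((nv^-1)%:C *: v) ((na^-1)%:C *: a)))%:E <= M%:E)%E.
      rewrite -E; apply: ereal_sup_ubound.
      exists ((nv^-1)%:C *: v), ((na^-1)%:C *: a); split => //.
        by rewrite hnorm_scale ?invr_ge0 ?ltW // mulVf ?gt_eqF.
      by rewrite dualnorm_scale ?invr_ge0 ?ltW // mulVf ?gt_eqF.
    have nvi : 0 <= nv^-1 by rewrite invr_ge0 ltW.
    have nai : 0 <= na^-1 by rewrite invr_ge0 ltW.
    rewrite lee_fin rhoZl // rhoZr // in key.
    rewrite !hnorm_scale // in key.
    have := ler_wpM2l (mulr_ge0 (ltW vpos) (ltW apos)) key.
    have -> : nv * na * (nv^-1 * (na^-1 * hnorm HW (rho v a))) = hnorm HW (rho v a).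
      by field; rewrite !gt_eqF.
    by have -> : nv * na * M = M * nv * na by ring.
  have := core he hl hr M0 hM hlin hP.
  by rewrite -!EFinM lee_fin.
- rewrite mulry gtr0_sg ?sqrtr_gt0 ?ltr0n // mul1e mulyr gtr0_sg // mul1e.
  exact: leey.
- by [].
Qed.
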